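(* Let $a>0$ and $0<V_{\min}<V_{\max}$, and let $Q=[0,a]^2$. A point enters $Q$ through the bottom side at $(X,0)$ and moves in a straight line at constant speed $V$ in direction making angle $\Phi$ with the bottom side (direction $(\cos\Phi,\sin\Phi)$), where $X\sim\mathrm{Uniform}[0,a]$, $\Phi\sim\mathrm{Uniform}(0,\pi)$, $V\sim\mathrm{Uniform}[V_{\min},V_{\max}]$ are independent. Let $T$ be the time until it leaves $Q$. Put $$K=\frac{1}{a\pi(V_{\max}-V_{\min})},$$ $$I_{aw}=\frac{Ka^2}{2}\log\!\left(\frac{V_{\max}}{V_{\min}}\right)\left[\log(\sqrt2+1)+(\sqrt2-1)\right],\qquad I_{ow}=2Ka^2\log\!\left(\frac{V_{\max}}{V_{\min}}\right)\left[\log(\sqrt2+1)+(1-\sqrt2)\right],$$ where $\log$ is the natural logarithm. Then for each of the two sides adjacent to the entry side, $\mathbb{E}[T\,\mathbf{1}\{\text{exit through that side}\}]=I_{aw}$; $\mathbb{E}[T\,\mathbf{1}\{\text{exit through the opposite side}\}]=I_{ow}$; and hence the expected contact time with one node stationary, $\overline{T^{s}_{con}}:=\mathbb{E}[T]$, satisfies $\overline{T^{s}_{con}}=2I_{aw}+I_{ow}$.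
   Context: Interpretation: nodes communicate iff they are in the same square cell of side $a$; when one node is stationary, the contact lasts from the moment the moving node enters the stationary node's cell until it leaves it. The moving node is assumed to traverse the cell along a single straight segment, with point of entry, angle of entry and speed uniformly distributed as stated (by symmetry, the entry side can be taken to be the bottom side). Exits through a corner have probability zero. *)

(* Defs.v *)
From Stdlib Require Import Reals.
Open Scope R_scope.

Definition RInt_val (f : R -> R) (lo hi l : R) : Prop :=
  exists pr : Riemann_integrable f lo hi, RiemannInt pr = l.

Definition iter_int3 (F : R -> R -> R -> R)
  (a1 b1 a2 b2 a3 b3 l : R) : Prop :=
  exists (G : R -> R) (H : R -> R -> R),
    (forall x, a1 <= x <= b1 -> forall y, a2 <= y <= b2 ->
        RInt_val (fun z => F x y z) a3 b3 (H x y)) /\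
    (forall x, a1 <= x <= b1 -> RInt_val (fun y => H x y) a2 b2 (G x)) /\
    RInt_val G a1 b1 l.

(** Geometry: the node enters Q = [0,a]^2 at (x,0), moves with speed v in
    direction (cos phi, sin phi), phi in (0,pi).  Times needed to reach the
    lines supporting the three other sides. *)
Definition t_top (a phi v : R) : R := a / (v * sin phi).
Definition t_right (a x phi v : R) : R := (a - x) / (v * cos phi).
Definition t_left (x phi v : R) : R := x / (v * - cos phi).

Definition ind_right (a x phi v : R) : R :=
  if Rlt_dec 0 (cos phi) then
    (if Rlt_dec (t_right a x phi v) (t_top a phi v) then 1 else 0)
  else 0.

Definition ind_left (a x phi v : R) : R :=
  if Rlt_dec (cos phi) 0 then
    (if Rlt_dec (t_left x phi v) (t_top a phi v) then 1 else 0)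
  else 0.

(** Indicator of exit through the opposite (top) side (corners: prob. zero). *)
Definition ind_top (a x phi v : R) : R :=
  1 - ind_right a x phi v - ind_left a x phi v.

Definition exit_time (a x phi v : R) : R :=
  ind_right a x phi v * t_right a x phi v
  + ind_left a x phi v * t_left x phi v
  + ind_top a x phi v * t_top a phi v.

(** Expectation of g(X,Phi,V) with X ~ U[0,a], Phi ~ U(0,pi),
    V ~ U[Vmin,Vmax] independent: joint density 1/(a pi (Vmax-Vmin)). *)
Definition expectation (a Vmin Vmax : R) (g : R -> R -> R -> R) (l : R) : Prop :=
  exists I, iter_int3 g 0 a 0 PI Vmin Vmax I /\
            l = I / (a * PI * (Vmax - Vmin)).

(* Main.v *)
Require Import Defs.
From Stdlib Require Import Reals Lra.
From Coquelicot Require Import Coquelicot.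
Open Scope R_scope.

Lemma RInt_val_of (f : R -> R) (lo hi l : R) : is_RInt f lo hi l -> Defs.RInt_val f lo hi l.
Proof.
  intro H. assert (E: ex_RInt f lo hi) by (exists l; exact H).
  exists (ex_RInt_Reals_0 _ _ _ E). rewrite <- RInt_Reals. now apply is_RInt_unique.
Qed.

Lemma is_RInt_mult_r (f : R -> R) lo hi l k :
  is_RInt f lo hi l -> is_RInt (fun y => f y * k) lo hi (l * k).
Proof.
  intro H. apply (is_RInt_scal _ _ _ k) in H.
  replace (l * k) with (scal k l) by (unfold scal; simpl; unfold mult; simpl; ring).
  eapply is_RInt_ext; [|exact H]. intros; unfold scal; simpl; unfold mult; simpl; ring.
Qed.

Lemma is_RInt_add (f g : R -> R) lo hi l1 l2 :
  is_RInt f lo hi l1 -> is_RInt g lo hi l2 -> is_RInt (fun y => f y + g y) lo hi (l1 + l2).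
Proof. intros H1 H2. exact (is_RInt_plus _ _ _ _ _ _ H1 H2). Qed.

Lemma FTC (F f : R -> R) lo hi : lo <= hi ->
  (forall x, lo <= x <= hi -> is_derive F x (f x)) ->
  (forall x, lo <= x <= hi -> continuous f x) -> is_RInt f lo hi (F hi - F lo).
Proof.
  intros Hle Hd Hc. apply (is_RInt_derive F f).
  - rewrite Rmin_left, Rmax_right by lra. exact Hd.
  - rewrite Rmin_left, Rmax_right by lra. exact Hc.
Qed.

Lemma is_RInt_chasles (f : R -> R) a b c l1 l2 :
  is_RInt f a b l1 -> is_RInt f b c l2 -> is_RInt f a c (l1 + l2).
Proof. intros H1 H2. exact (is_RInt_Chasles _ _ _ _ _ _ H1 H2). Qed.

Lemma is_RInt_eqv (f : R -> R) lo hi l l' : l = l' -> is_RInt f lo hi l -> is_RInt f lo hi l'.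
Proof. intros; subst; auto. Qed.

Lemma is_RInt_zero (f : R -> R) lo hi : lo <= hi -> (forall x, lo < x < hi -> f x = 0) ->
  is_RInt f lo hi 0.
Proof.
  intros Hle H. assert (Hc := is_RInt_const lo hi (0:R)).
  apply (is_RInt_eqv _ _ _ _ 0) in Hc; [|unfold scal; simpl; unfold mult; simpl; ring].
  eapply is_RInt_ext; [|exact Hc]. rewrite Rmin_left, Rmax_right by lra.
  intros; simpl; rewrite H; auto.
Qed.

Lemma is_RInt_refl (f : R -> R) c l : is_RInt f 0 c l -> is_RInt (fun y => f (c - y)) 0 c l.
Proof.
  intro H. assert (H1 : is_RInt f (-1 * 0 + c) (-1 * c + c) (opp l)).
  { replace (-1*c+c) with 0 by ring. replace (-1*0+c) with c by ring. exact (is_RInt_swap _ _ _ _ H). }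
  apply is_RInt_comp_lin in H1. apply (is_RInt_scal _ _ _ (-1)) in H1.
  replace l with (scal (-1) (opp l)) by (unfold scal, opp; simpl; unfold mult; simpl; ring).
  eapply is_RInt_ext; [|exact H1]. intros; unfold scal; simpl; unfold mult; simpl.
  replace (-1 * x + c) with (c - x) by ring. ring.
Qed.

Lemma vint c lo hi : 0 < lo <= hi -> is_RInt (fun v => c / v) lo hi (c * (ln hi - ln lo)).
Proof.
  intro H. replace (c * (ln hi - ln lo)) with (c * ln hi - c * ln lo) by ring.
  apply (FTC (fun v => c * ln v)); [lra| |].
  - intros x Hx. auto_derive; [lra|]. field; lra.
  - intros x Hx. apply (ex_derive_continuous (fun v : R => c / v)). auto_derive. lra.
Qed.

Lemma t_top_v a phi v : t_top a phi v = t_top a phi 1 / v.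
Proof. unfold t_top, Rdiv. rewrite !Rinv_mult, Rinv_1. ring. Qed.
Lemma t_right_v a x phi v : t_right a x phi v = t_right a x phi 1 / v.
Proof. unfold t_right, Rdiv. rewrite !Rinv_mult, Rinv_1. ring. Qed.
Lemma t_left_v x phi v : t_left x phi v = t_left x phi 1 / v.
Proof. unfold t_left, Rdiv. rewrite !Rinv_mult, Rinv_1. ring. Qed.

Lemma lt_div_v p q v : 0 < v -> (p / v < q / v <-> p < q).
Proof.
  intro Hv. split; intro H.
  - apply Rmult_lt_compat_r with (r := v) in H; [|lra].
    unfold Rdiv in H. rewrite !Rmult_assoc, Rinv_l, !Rmult_1_r in H by lra. exact H.
  - apply Rmult_lt_compat_r; [apply Rinv_0_lt_compat; lra|exact H].
Qed.

Lemma ind_right_v a x phi v : 0 < v -> ind_right a x phi v = ind_right a x phi 1.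
Proof.
  intro Hv. unfold ind_right. rewrite (t_right_v a x phi v), (t_top_v a phi v).
  destruct (Rlt_dec 0 (cos phi)); [|reflexivity].
  destruct (Rlt_dec (t_right a x phi 1 / v) (t_top a phi 1 / v)) as [h|h];
  destruct (Rlt_dec (t_right a x phi 1) (t_top a phi 1)) as [h'|h']; try reflexivity;
  exfalso; first [apply h'; apply (proj1 (lt_div_v _ _ v Hv)); exact h
                 | apply h; apply (proj2 (lt_div_v _ _ v Hv)); exact h'].
Qed.
Lemma ind_left_v a x phi v : 0 < v -> ind_left a x phi v = ind_left a x phi 1.
Proof.
  intro Hv. unfold ind_left. rewrite (t_left_v x phi v), (t_top_v a phi v).
  destruct (Rlt_dec (cos phi) 0); [|reflexivity].
  destruct (Rlt_dec (t_left x phi 1 / v) (t_top a phi 1 / v)) as [h|h];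
  destruct (Rlt_dec (t_left x phi 1) (t_top a phi 1)) as [h'|h']; try reflexivity;
  exfalso; first [apply h'; apply (proj1 (lt_div_v _ _ v Hv)); exact h
                 | apply h; apply (proj2 (lt_div_v _ _ v Hv)); exact h'].
Qed.
Lemma ind_top_v a x phi v : 0 < v -> ind_top a x phi v = ind_top a x phi 1.
Proof. intro Hv. unfold ind_top. rewrite ind_right_v, ind_left_v; auto. Qed.
Lemma exit_time_v a x phi v : 0 < v -> exit_time a x phi v = exit_time a x phi 1 / v.
Proof.
  intro Hv. unfold exit_time. rewrite ind_right_v, ind_left_v, ind_top_v by auto.
  rewrite (t_right_v a x phi v), (t_left_v x phi v), (t_top_v a phi v). field. lra.
Qed.

Lemma assemble a Vmin Vmax (g : R -> R -> R -> R) (q : R -> R -> R) (G : R -> R) (J : R) :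
  0 < a -> 0 < Vmin -> Vmin < Vmax ->
  (forall x phi v, 0 < v -> g x phi v = q x phi / v) ->
  (forall x, 0 <= x <= a -> is_RInt (q x) 0 PI (G x)) -> is_RInt G 0 a J ->
  expectation a Vmin Vmax g (J * (ln Vmax - ln Vmin) / (a * PI * (Vmax - Vmin))).
Proof.
  intros Ha Hm Hl Hg Hq HG. exists (J * (ln Vmax - ln Vmin)). split; [|reflexivity].
  exists (fun x => G x * (ln Vmax - ln Vmin)), (fun x y => q x y * (ln Vmax - ln Vmin)).
  split; [|split].
  - intros x _ y _. apply RInt_val_of.
    eapply is_RInt_ext; [|apply vint; lra]. rewrite Rmin_left, Rmax_right by lra.
    intros v Hv. rewrite Hg by lra. reflexivity.
  - intros x Hx. apply RInt_val_of. apply is_RInt_mult_r. auto.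
  - apply RInt_val_of. apply is_RInt_mult_r. auto.
Qed.

Definition rr a p := sqrt (a ^ 2 + p ^ 2).
Definition th a p := acos (p / rr a p).

Lemma rr_pos a p : 0 < a -> 0 < rr a p.
Proof. intro. unfold rr. apply sqrt_lt_R0. nra. Qed.
Lemma rr_sq a p : rr a p * rr a p = a ^ 2 + p ^ 2.
Proof. unfold rr. apply sqrt_sqrt. nra. Qed.
Lemma rr_gt a p : 0 < a -> Rabs p < rr a p.
Proof.
  intro Ha. pose proof (rr_pos a p Ha). pose proof (rr_sq a p).
  set (r := rr a p) in *. assert (a * a > 0) by nra.
  apply Rabs_def1.
  - destruct (Rlt_dec p r); auto. assert (p * p >= r * r) by nra. simpl in *. nra.
  - destruct (Rlt_dec (-r) p); auto. assert (p * p >= r * r) by nra. simpl in *. nra.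
Qed.

Lemma div_le_1 p r : 0 < r -> p <= r -> p / r <= 1.
Proof. intros. unfold Rdiv. apply Rmult_le_reg_r with r; auto.
  rewrite Rmult_assoc, Rinv_l by lra. lra. Qed.

Lemma th_facts a p : 0 < a -> 0 <= p ->
  0 < th a p <= PI / 2 /\ cos (th a p) = p / rr a p /\ sin (th a p) = a / rr a p.
Proof.
  intros Ha Hp. pose proof (rr_pos a p Ha) as Hr. pose proof (rr_sq a p) as Hs.
  pose proof (rr_gt a p Ha) as Hg. rewrite Rabs_right in Hg by lra.
  assert (Hb : -1 <= p / rr a p <= 1).
  { split; [apply Rle_trans with 0; [lra|]; apply Rdiv_le_0_compat; lra|].
    apply div_le_1; lra. }
  assert (Hc : cos (th a p) = p / rr a p) by (unfold th; apply cos_acos; auto).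
  assert (Hsn : sin (th a p) = a / rr a p).
  { unfold th. rewrite sin_acos by auto.
    replace (1 - (p / rr a p)²) with ((a / rr a p)²).
    - apply sqrt_Rsqr. apply Rdiv_le_0_compat; lra.
    - unfold Rsqr. assert (E : a * a = rr a p * rr a p - p * p) by (rewrite Hs; ring).
      replace (a / rr a p * (a / rr a p)) with (a * a / (rr a p * rr a p)) by (field; lra).
      rewrite E. field. lra. }
  split; [|split; auto].
  pose proof (acos_bound (p / rr a p)) as Hab. fold (th a p) in Hab.
  split.
  - destruct (Req_dec (th a p) 0) as [E|E]; [|lra].
    rewrite E, cos_0 in Hc. apply Rmult_eq_compat_r with (r := rr a p) in Hc.
    unfold Rdiv in Hc. rewrite Rmult_assoc, Rinv_l, Rmult_1_r in Hc by lra. lra.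
  - destruct (Rle_dec (th a p) (PI/2)) as [h|h]; [auto|].
    destruct (Req_dec (th a p) PI) as [E|E].
    + rewrite E, cos_PI in Hc. assert (0 <= p / rr a p) by (apply Rdiv_le_0_compat; lra). lra.
    + assert (cos (th a p) < 0) by (apply cos_lt_0; lra).
      assert (0 <= p / rr a p) by (apply Rdiv_le_0_compat; lra). lra.
Qed.

Lemma div_lt_iff p q c s : 0 < c -> 0 < s -> (p / c < q / s <-> p * s < q * c).
Proof.
  intros Hc Hs. split; intro H.
  - apply Rmult_lt_compat_r with (r := c * s) in H; [|nra].
    replace (p / c * (c * s)) with (p * s) in H by (field; lra).
    replace (q / s * (c * s)) with (q * c) in H by (field; lra). exact H.
  - apply Rmult_lt_reg_r with (c * s); [nra|].
    replace (p / c * (c * s)) with (p * s) by (field; lra).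
    replace (q / s * (c * s)) with (q * c) by (field; lra). exact H.
Qed.

Section Geo.
Variables a x : R.
Hypothesis Ha : 0 < a.
Hypothesis Hx : 0 <= x <= a.

Definition th1 := th a (a - x).
Definition th2 := PI - th a x.

Lemma th1_facts : 0 < th1 <= PI / 2 /\ cos th1 = (a - x) / rr a (a - x) /\ sin th1 = a / rr a (a - x).
Proof. apply th_facts; lra. Qed.
Lemma th2_facts : PI / 2 <= th2 < PI /\ cos th2 = - (x / rr a x) /\ sin th2 = a / rr a x.
Proof.
  destruct (th_facts a x Ha (proj1 Hx)) as [H1 [H2 H3]]. unfold th2.
  rewrite Rtrigo_facts.cos_pi_minus, sin_PI_x, H2, H3. repeat split; lra.
Qed.

Lemma I1 phi : a * cos phi - (a - x) * sin phi = rr a (a - x) * sin (th1 - phi).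
Proof.
  destruct th1_facts as [_ [Hc Hs]]. pose proof (rr_pos a (a - x) Ha).
  rewrite sin_minus, Hc, Hs. field. lra.
Qed.
Lemma I2 phi : - a * cos phi - x * sin phi = rr a x * sin (phi - th2).
Proof.
  destruct th2_facts as [_ [Hc Hs]]. pose proof (rr_pos a x Ha).
  rewrite sin_minus, Hc, Hs. field. lra.
Qed.

Lemma R1 phi : 0 < phi < th1 -> ind_right a x phi 1 = 1.
Proof.
  intro Hp. destruct th1_facts as [Ht _]. pose proof PI_RGT_0.
  assert (Hc : 0 < cos phi) by (apply cos_gt_0; lra).
  assert (Hs : 0 < sin phi) by (apply sin_gt_0; lra).
  assert (0 < sin (th1 - phi)) by (apply sin_gt_0; lra).
  pose proof (I1 phi). pose proof (rr_pos a (a - x) Ha).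
  unfold ind_right. destruct (Rlt_dec 0 (cos phi)); [|lra].
  destruct (Rlt_dec _ _) as [h|h]; [reflexivity|]. exfalso; apply h.
  unfold t_right, t_top. rewrite !Rmult_1_l. apply div_lt_iff; auto.
  assert (0 < rr a (a - x) * sin (th1 - phi)) by (apply Rmult_lt_0_compat; auto). lra.
Qed.

Lemma R0 phi : th1 < phi < PI -> ind_right a x phi 1 = 0.
Proof.
  intro Hp. destruct th1_facts as [Ht _]. pose proof PI_RGT_0.
  assert (Hs : 0 < sin phi) by (apply sin_gt_0; lra).
  assert (sin (th1 - phi) < 0) by (apply sin_lt_0_var; lra).
  pose proof (I1 phi). pose proof (rr_pos a (a - x) Ha).
  unfold ind_right. destruct (Rlt_dec 0 (cos phi)); [|reflexivity].
  destruct (Rlt_dec _ _) as [h|h]; [|reflexivity]. exfalso.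
  unfold t_right, t_top in h. rewrite !Rmult_1_l in h. apply (proj1 (div_lt_iff _ _ _ _ r Hs)) in h.
  assert (rr a (a - x) * sin (th1 - phi) < 0).
  { rewrite <- (Rmult_0_r (rr a (a-x))). apply Rmult_lt_compat_l; auto. } lra.
Qed.

Lemma L1 phi : th2 < phi < PI -> ind_left a x phi 1 = 1.
Proof.
  intro Hp. destruct th2_facts as [Ht _]. pose proof PI_RGT_0.
  assert (Hc : cos phi < 0) by (apply cos_lt_0; lra).
  assert (Hs : 0 < sin phi) by (apply sin_gt_0; lra).
  assert (0 < sin (phi - th2)) by (apply sin_gt_0; lra).
  pose proof (I2 phi). pose proof (rr_pos a x Ha).
  unfold ind_left. destruct (Rlt_dec (cos phi) 0); [|lra].
  destruct (Rlt_dec _ _) as [h|h]; [reflexivity|]. exfalso; apply h.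
  unfold t_left, t_top. rewrite !Rmult_1_l. apply div_lt_iff; auto; [lra|].
  assert (0 < rr a x * sin (phi - th2)) by (apply Rmult_lt_0_compat; auto). lra.
Qed.

Lemma L0 phi : 0 < phi < th2 -> ind_left a x phi 1 = 0.
Proof.
  intro Hp. destruct th2_facts as [Ht _]. pose proof PI_RGT_0.
  assert (Hs : 0 < sin phi) by (apply sin_gt_0; lra).
  assert (sin (phi - th2) < 0) by (apply sin_lt_0_var; lra).
  pose proof (I2 phi). pose proof (rr_pos a x Ha).
  unfold ind_left. destruct (Rlt_dec (cos phi) 0); [|reflexivity].
  destruct (Rlt_dec _ _) as [h|h]; [|reflexivity]. exfalso.
  unfold t_left, t_top in h. rewrite !Rmult_1_l in h. assert (Hc' : 0 < - cos phi) by lra.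
  apply (proj1 (div_lt_iff _ _ _ _ Hc' Hs)) in h.
  assert (rr a x * sin (phi - th2) < 0).
  { rewrite <- (Rmult_0_r (rr a x)). apply Rmult_lt_compat_l; auto. } lra.
Qed.

End Geo.

Definition qR a x phi := exit_time a x phi 1 * ind_right a x phi 1.
Definition qL a x phi := exit_time a x phi 1 * ind_left a x phi 1.
Definition qT a x phi := exit_time a x phi 1 * ind_top a x phi 1.
Definition GR a x := (a - x) * ln ((rr a (a - x) + a) / (a - x)).
Definition GT a x := a * (ln (1 + x / rr a x) - ln (a / rr a x))
  - a * (ln (1 - (a - x) / rr a (a - x)) - ln (a / rr a (a - x))).

Lemma deriv_sec c y : 0 < cos y -> -1 < sin y ->
  is_derive (fun p => c * ln ((1 + sin p) / cos p)) y (c / cos y).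
Proof.
intros Hc Hs. auto_derive.
- repeat split; try lra. apply Rmult_lt_0_compat; [lra|apply Rinv_0_lt_compat; lra].
- assert (E := sin2_cos2 y). unfold Rsqr in E. field_simplify; try lra.
  replace (c * cos y ^ 2 + c * sin y ^ 2 + c * sin y) with (c * (1 + sin y)).
  field; repeat split; try lra; nra.
  transitivity (c*(sin y*sin y+cos y*cos y) + c*sin y); [rewrite E; ring|ring].
Qed.

Lemma deriv_csc c y : 0 < sin y -> cos y < 1 ->
  is_derive (fun p => c * (ln (1 - cos p) - ln (sin p))) y (c / sin y).
Proof.
intros Hs Hc. auto_derive.
- repeat split; lra.
- assert (E := sin2_cos2 y). unfold Rsqr in E. field_simplify; try lra.
  replace (c * sin y ^ 2 + c * cos y ^ 2 - c * cos y) with (c * (1 - cos y)).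
  field; repeat split; try lra; nra.
  transitivity (c*(sin y*sin y+cos y*cos y) - c*cos y); [rewrite E; ring|ring].
Qed.

Section Mid.
Variables a x : R.
Hypothesis Ha : 0 < a.
Hypothesis Hx : 0 <= x <= a.

Let t1 := th1 a x.
Let t2 := th2 a x.
Lemma t12 : 0 < t1 <= PI / 2 /\ PI / 2 <= t2 < PI.
Proof. destruct (th1_facts a x Ha Hx) as [h _]; destruct (th2_facts a x Ha Hx) as [h' _]. split; auto. Qed.

Lemma qR_1 phi : 0 < phi < t1 -> qR a x phi = (a - x) / cos phi.
Proof.
  intro Hp. destruct t12. unfold qR, exit_time, ind_top.
  rewrite (R1 a x Ha Hx phi Hp), (L0 a x Ha Hx phi) by (unfold t1, t2 in *; lra).
  unfold t_right. replace (1 * cos phi) with (cos phi) by ring. ring.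
Qed.
Lemma qR_0 phi : t1 < phi < PI -> qR a x phi = 0.
Proof. intro Hp. unfold qR. rewrite (R0 a x Ha Hx phi Hp). ring. Qed.
Lemma qT_1 phi : 0 < phi < t1 -> qT a x phi = 0.
Proof.
  intro Hp. destruct t12. unfold qT, ind_top.
  rewrite (R1 a x Ha Hx phi Hp), (L0 a x Ha Hx phi) by (unfold t1, t2 in *; lra). ring.
Qed.
Lemma qT_2 phi : t1 < phi < t2 -> qT a x phi = a / sin phi.
Proof.
  intro Hp. destruct t12. unfold qT, exit_time, ind_top.
  rewrite (R0 a x Ha Hx phi), (L0 a x Ha Hx phi) by (unfold t1, t2 in *; lra).
  unfold t_top. replace (1 * sin phi) with (sin phi) by ring. ring.
Qed.
Lemma qT_3 phi : t2 < phi < PI -> qT a x phi = 0.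
Proof.
  intro Hp. destruct t12. unfold qT, ind_top.
  rewrite (R0 a x Ha Hx phi), (L1 a x Ha Hx phi) by (unfold t1, t2 in *; lra). ring.
Qed.

Lemma mid_R : is_RInt (qR a x) 0 PI (GR a x).
Proof.
  destruct t12 as [[h1 h1'] [h2 h2']]. destruct (th1_facts a x Ha Hx) as [_ [Hc Hs]].
  fold t1 in Hc, Hs. pose proof (rr_pos a (a - x) Ha) as Hr.
  replace (GR a x) with (GR a x + 0) by ring.
  apply is_RInt_chasles with t1.
  - destruct (Rlt_dec x a) as [Hxa|Hxa].
    + assert (Hc0 : 0 < cos t1) by (rewrite Hc; apply Rdiv_lt_0_compat; lra).
      assert (Ht : t1 < PI / 2).
      { destruct (Req_dec t1 (PI/2)) as [E|E]; [|lra]. rewrite E, cos_PI2 in Hc0. lra. }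
      eapply is_RInt_ext.
      { rewrite Rmin_left, Rmax_right by lra. intros p Hp. symmetry. apply qR_1. exact Hp. }
      replace (GR a x) with ((a - x) * ln ((1 + sin t1) / cos t1) - (a - x) * ln ((1 + sin 0) / cos 0)).
      * apply (FTC (fun p => (a - x) * ln ((1 + sin p) / cos p))); [lra| |].
        -- intros p Hp. apply deriv_sec.
           ++ apply cos_gt_0; lra.
           ++ assert (0 <= sin p) by (apply sin_ge_0; lra). lra.
        -- intros p Hp. apply (ex_derive_continuous (fun p => (a - x) / cos p)).
           auto_derive. assert (0 < cos p) by (apply cos_gt_0; lra). lra.
      * rewrite sin_0, cos_0, Hs, Hc. replace ((1 + 0) / 1) with 1 by field. rewrite ln_1.
        unfold GR. replace ((1 + a / rr a (a - x)) / ((a - x) / rr a (a - x)))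
          with ((rr a (a - x) + a) / (a - x)) by (field; lra). ring.
    + assert (E : a - x = 0) by lra.
      replace (GR a x) with 0 by (unfold GR; rewrite E; ring).
      apply is_RInt_zero; [lra|]. intros p Hp. rewrite qR_1 by lra. rewrite E. unfold Rdiv. ring.
  - apply is_RInt_zero; [lra|]. intros p Hp. apply qR_0. lra.
Qed.

Lemma mid_T : is_RInt (qT a x) 0 PI (GT a x).
Proof.
  destruct t12 as [[h1 h1'] [h2 h2']]. destruct (th1_facts a x Ha Hx) as [_ [Hc Hs]].
  destruct (th2_facts a x Ha Hx) as [_ [Hc2 Hs2]].
  fold t1 in Hc, Hs. fold t2 in Hc2, Hs2.
  replace (GT a x) with (0 + (GT a x + 0)) by ring.
  apply is_RInt_chasles with t1; [|apply is_RInt_chasles with t2].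
  - apply is_RInt_zero; [lra|]. intros p Hp. apply qT_1. lra.
  - eapply is_RInt_ext.
    { rewrite Rmin_left, Rmax_right by lra. intros p Hp. symmetry. apply qT_2. exact Hp. }
    replace (GT a x) with (a * (ln (1 - cos t2) - ln (sin t2)) - a * (ln (1 - cos t1) - ln (sin t1))).
    + apply (FTC (fun p => a * (ln (1 - cos p) - ln (sin p)))); [lra| |].
      * intros p Hp. assert (0 < sin p) by (apply sin_gt_0; lra).
        apply deriv_csc; auto.
        assert (E := sin2_cos2 p). unfold Rsqr in E. nra.
      * intros p Hp. apply (ex_derive_continuous (fun p => a / sin p)).
        auto_derive. assert (0 < sin p) by (apply sin_gt_0; lra). lra.
    + rewrite Hc, Hs, Hc2, Hs2. unfold GT. replace (1 - - (x / rr a x)) with (1 + x / rr a x) by ring.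
      reflexivity.
  - apply is_RInt_zero; [lra|]. intros p Hp. apply qT_3. lra.
Qed.

End Mid.

Lemma qL_sym a x phi : qL a x phi = qR a (a - x) (PI - phi).
Proof.
  unfold qL, qR, exit_time, ind_top, ind_right, ind_left, t_right, t_left, t_top.
  rewrite Rtrigo_facts.cos_pi_minus, sin_PI_x. replace (a - (a - x)) with x by ring.
  replace (1 * - - cos phi) with (1 * cos phi) by ring.
  repeat destruct (Rlt_dec _ _); try lra; ring.
Qed.

Lemma mid_L a x : 0 < a -> 0 <= x <= a -> is_RInt (qL a x) 0 PI (GR a (a - x)).
Proof.
  intros Ha Hx. assert (H := mid_R a (a - x) Ha ltac:(lra)).
  apply is_RInt_refl in H. eapply is_RInt_ext; [|exact H].
  intros p _. simpl. rewrite qL_sym. reflexivity.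
Qed.

Lemma ln_lt_self z : 0 < z -> ln z < z.
Proof.
  intro Hz. assert (H := exp_ineq1 z ltac:(lra)).
  rewrite <- (ln_exp z) at 2. apply ln_increasing; lra.
Qed.
Lemma ln_le_2sqrt y : 0 < y -> ln y <= 2 * sqrt y.
Proof.
  intro Hy. assert (Hs := sqrt_lt_R0 y Hy).
  rewrite <- (sqrt_sqrt y) at 1 by lra. rewrite ln_mult by lra.
  assert (H := ln_lt_self (sqrt y) Hs). lra.
Qed.
Lemma ln_nonpos y : y <= 0 -> ln y = 0.
Proof. intro H. unfold ln. destruct (Rlt_dec 0 y) as [h|h]. { exfalso. apply (Rle_not_lt _ _ H h). } reflexivity. Qed.

Definition gR a u := u * ln ((rr a u + a) / u).
Definition PR a u := u ^ 2 / 2 * ln ((rr a u + a) / u) + a * rr a u / 2.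

Lemma rr_le a u : 0 < a -> Rabs u <= a -> rr a u <= 2 * a.
Proof.
  intros Ha Hu. pose proof (rr_pos a u Ha). pose proof (rr_sq a u).
  assert (u * u <= a * a) by (revert Hu; unfold Rabs; destruct (Rcase_abs u); intro; nra).
  simpl in *. nra.
Qed.

Lemma rr_ge a u : 0 < a -> a <= rr a u.
Proof.
  intros Ha. pose proof (rr_pos a u Ha). pose proof (rr_sq a u). simpl in *. nra.
Qed.

Lemma sqrt_mul_eq u c : 0 < u -> 0 <= c -> u * sqrt (c / u) = sqrt (c * u).
Proof.
  intros Hu Hc. replace (c * u) with ((u * u) * (c / u)) by (field; lra).
  assert (0 <= c / u) by (apply Rdiv_le_0_compat; lra).
  rewrite sqrt_mult by nra. rewrite sqrt_square by lra. reflexivity.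
Qed.

Lemma gR_bound a u : 0 < a -> Rabs u <= a -> Rabs (gR a u) <= 2 * sqrt (3 * a * Rabs u).
Proof.
  intros Ha Hu. pose proof (rr_pos a u Ha). pose proof (rr_le a u Ha Hu). pose proof (rr_ge a u Ha).
  assert (S0 : 0 <= sqrt (3 * a * Rabs u)) by apply sqrt_pos.
  unfold gR. destruct (Rtotal_order u 0) as [Hn|[Hz|Hp]].
  - rewrite ln_nonpos. rewrite Rmult_0_r, Rabs_R0; lra.
    unfold Rdiv. assert (/ u < 0) by (apply Rinv_lt_0_compat; lra). nra.
  - subst u. rewrite Rmult_0_l. rewrite !Rabs_R0 in *. lra.
  - rewrite (Rabs_right u) in Hu |- * by lra. rewrite Rabs_right.
    + apply Rle_trans with (u * ln (3 * a / u)).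
      * apply Rmult_le_compat_l; [lra|]. apply ln_le.
        -- apply Rdiv_lt_0_compat; lra.
        -- unfold Rdiv. apply Rmult_le_compat_r; [left; apply Rinv_0_lt_compat; lra|lra].
      * apply Rle_trans with (u * (2 * sqrt (3 * a / u))).
        -- apply Rmult_le_compat_l; [lra|]. apply ln_le_2sqrt. apply Rdiv_lt_0_compat; lra.
        -- rewrite <- sqrt_mul_eq by lra. lra.
    + apply Rle_ge, Rmult_le_pos; [lra|]. rewrite <- ln_1. apply ln_le; [lra|].
      apply Rmult_le_reg_r with u; [lra|]. unfold Rdiv. rewrite Rmult_assoc, Rinv_l; lra.
Qed.

Lemma small a eps : 0 < a -> 0 < eps -> exists d, 0 < d /\ forall u, Rabs u < d ->
  Rabs u <= a /\ 2 * sqrt (3 * a * Rabs u) < eps /\ Rabs u < eps.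
Proof.
  intros Ha He. exists (Rmin a (Rmin (eps * eps / (12 * a)) eps)). split.
  - apply Rmin_glb_lt; [lra|]. apply Rmin_glb_lt; [|lra].
    apply Rdiv_lt_0_compat; nra.
  - intros u Hu. pose proof (Rmin_l a (Rmin (eps * eps / (12 * a)) eps)).
    pose proof (Rmin_r a (Rmin (eps * eps / (12 * a)) eps)).
    pose proof (Rmin_l (eps * eps / (12 * a)) eps). pose proof (Rmin_r (eps * eps / (12 * a)) eps).
    pose proof (Rabs_pos u).
    split; [lra|split; [|lra]].
    assert (3 * a * Rabs u < (eps / 2) * (eps / 2)).
    { assert (Rabs u < eps * eps / (12 * a)) by lra.
      apply Rmult_lt_compat_l with (r := 3 * a) in H4; [|lra].
      replace (3 * a * (eps * eps / (12 * a))) with (eps / 2 * (eps / 2)) in H4 by (field; lra). lra. }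
    assert (sqrt (3 * a * Rabs u) < eps / 2).
    { rewrite <- (sqrt_square (eps / 2)) by lra. apply sqrt_lt_1; nra. }
    lra.
Qed.

Lemma gR_cont0 a : 0 < a -> continuous (gR a) 0.
Proof.
  intro Ha. apply continuity_pt_filterlim. unfold continuity_pt, continue_in, limit1_in, limit_in.
  intros eps Heps. destruct (small a eps Ha Heps) as [d [Hd H]]. exists d. split; auto.
  intros u [_ Hu]. simpl in *. unfold R_dist in *. rewrite Rminus_0_r in Hu.
  destruct (H u Hu) as [H1 [H2 H3]]. pose proof (gR_bound a u Ha H1).
  replace (gR a 0) with 0 by (unfold gR; ring). rewrite Rminus_0_r. lra.
Qed.

Lemma rr0 a : 0 < a -> rr a 0 = a.
Proof. intro. unfold rr. replace (a ^ 2 + 0 ^ 2) with (a * a) by ring. apply sqrt_square. lra. Qed.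

Lemma PR_deriv0 a : 0 < a -> is_derive (PR a) 0 (gR a 0).
Proof.
  intro Ha. apply is_derive_Reals. intros eps Heps.
  destruct (small a eps Ha Heps) as [d [Hd H]]. exists (mkposreal d Hd). intros h Hh0 Hh. simpl in Hh.
  destruct (H h Hh) as [H1 [H2 H3]]. pose proof (gR_bound a h Ha H1).
  pose proof (rr_pos a h Ha) as Hr. pose proof (rr_sq a h) as Hs. pose proof (rr_ge a h Ha).
  assert (E : rr a h - a = h * h / (rr a h + a)).
  { apply Rmult_eq_reg_r with (rr a h + a); [|lra]. field_simplify; [|lra]. simpl in Hs. nra. }
  assert (E2 : (PR a (0 + h) - PR a 0) / h - gR a 0 = gR a h / 2 + a * h / (2 * (rr a h + a))).
  { unfold PR, gR. rewrite Rplus_0_l, rr0 by auto.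
    assert (E' : a * rr a h / 2 = a * a / 2 + a * (h * h / (rr a h + a)) / 2).
    { rewrite <- E. field. }
    rewrite E'.
    field. lra. }
  rewrite E2.
  assert (Rabs (a * h / (2 * (rr a h + a))) <= Rabs h / 2).
  { rewrite Rabs_div, Rabs_mult, (Rabs_right a), (Rabs_right (2 * _)) by lra.
    apply Rmult_le_reg_r with (2 * (rr a h + a)); [lra|].
    unfold Rdiv. rewrite Rmult_assoc, Rinv_l by lra. pose proof (Rabs_pos h). nra. }
  apply Rle_lt_trans with (Rabs (gR a h / 2) + Rabs (a * h / (2 * (rr a h + a)))).
  apply Rabs_triang.
  unfold Rdiv at 1. rewrite Rabs_mult, (Rabs_right (/ 2)) by lra. lra.
Qed.

Lemma PR_deriv a u : 0 < a -> 0 < u -> is_derive (PR a) u (gR a u).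
Proof.
  intros Ha Hu. unfold PR, gR, rr. auto_derive.
  - pose proof (sqrt_pos (a * (a * 1) + u * (u * 1))).
    repeat split; try nra. apply Rmult_lt_0_compat; [lra|apply Rinv_0_lt_compat; lra].
  - replace (a^2+u^2) with (a * (a * 1) + u * (u * 1)) by ring.
    assert (Hr: sqrt (a * (a * 1) + u * (u * 1)) * sqrt (a * (a * 1) + u * (u * 1)) = a * (a * 1) + u * (u * 1)) by (apply sqrt_sqrt; nra).
    assert (Hp: 0 < sqrt (a * (a * 1) + u * (u * 1))) by (apply sqrt_lt_R0; nra).
    set (r := sqrt (a * (a * 1) + u * (u * 1))) in *.
    set (L := ln ((r + a) * / u)). unfold Rdiv. fold L.
    field_simplify; try lra.
    replace (r ^ 2) with (a ^ 2 + u ^ 2) by (simpl; lra). field. nra.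
Qed.

Lemma gR_cont a u : 0 < a -> 0 < u -> continuous (gR a) u.
Proof.
  intros Ha Hu. apply (ex_derive_continuous (gR a)). unfold gR, rr. auto_derive.
  pose proof (sqrt_pos (a * (a * 1) + u * (u * 1))).
  repeat split; try nra. apply Rmult_lt_0_compat; [lra|apply Rinv_0_lt_compat; lra].
Qed.

Lemma rr_aa a : 0 < a -> rr a a = a * sqrt 2.
Proof.
  intro Ha. unfold rr. replace (a ^ 2 + a ^ 2) with ((a * a) * 2) by ring.
  rewrite sqrt_mult, sqrt_square; lra || nra.
Qed.

Definition JR a := a ^ 2 / 2 * (ln (sqrt 2 + 1) + (sqrt 2 - 1)).
Definition JT a := 2 * a ^ 2 * (ln (sqrt 2 + 1) + (1 - sqrt 2)).

Lemma outer_g a : 0 < a -> is_RInt (gR a) 0 a (JR a).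
Proof.
  intro Ha. replace (JR a) with (PR a a - PR a 0).
  - apply FTC; [lra| |].
    + intros u Hu. destruct (Req_dec u 0) as [E|E].
      * subst u. apply PR_deriv0; auto.
      * apply PR_deriv; auto; lra.
    + intros u Hu. destruct (Req_dec u 0) as [E|E].
      * subst u. apply gR_cont0; auto.
      * apply gR_cont; auto; lra.
  - unfold PR, JR. rewrite rr0, rr_aa by auto.
    replace ((a * sqrt 2 + a) / a) with (sqrt 2 + 1) by (field; lra).
    replace (0 ^ 2 / 2 * ln ((a + a) / 0)) with 0 by (simpl; field). field.
Qed.

Lemma outer_R a : 0 < a -> is_RInt (GR a) 0 a (JR a).
Proof. intro Ha. exact (is_RInt_refl _ _ _ (outer_g a Ha)). Qed.
Lemma outer_L a : 0 < a -> is_RInt (fun x => GR a (a - x)) 0 a (JR a).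
Proof. intro Ha. apply is_RInt_refl. apply outer_R. auto. Qed.

Definition hT a t := t * ln ((rr a t + t) / a) - rr a t.
Definition gT a t := ln ((rr a t + t) / a).

Lemma rr_plus a t : 0 < a -> 0 < rr a t + t.
Proof. intro Ha. pose proof (rr_gt a t Ha). revert H. unfold Rabs; destruct (Rcase_abs t); intro; lra. Qed.

Lemma hT_deriv a t : 0 < a -> is_derive (hT a) t (gT a t).
Proof.
  intros Ha. pose proof (rr_plus a t Ha) as Hp. pose proof (rr_pos a t Ha) as Hr.
  unfold hT, gT, rr in *. auto_derive.
  - repeat split; try nra. apply Rmult_lt_0_compat; [|apply Rinv_0_lt_compat; lra].
    replace (a * (a * 1) + t * (t * 1)) with (a ^ 2 + t ^ 2) by ring. lra.
  - replace (a * (a * 1) + t * (t * 1)) with (a ^ 2 + t ^ 2) by ring.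
    set (r := sqrt (a ^ 2 + t ^ 2)) in *.
    set (L := ln ((r + t) * / a)). unfold Rdiv. fold L.
    field. lra.
Qed.

Lemma gT_cont a t : 0 < a -> continuous (gT a) t.
Proof.
  intros Ha. pose proof (rr_plus a t Ha) as Hp. pose proof (rr_pos a t Ha) as Hr.
  apply (ex_derive_continuous (gT a)). unfold gT, rr in *. auto_derive.
  repeat split; try nra. apply Rmult_lt_0_compat; [|apply Rinv_0_lt_compat; lra].
  replace (a * (a * 1) + t * (t * 1)) with (a ^ 2 + t ^ 2) by ring. lra.
Qed.

Lemma GT_eq a x : 0 < a -> 0 <= x <= a -> GT a x = a * gT a x + a * gT a (a - x).
Proof.
  intros Ha Hx. pose proof (rr_pos a x Ha). pose proof (rr_pos a (a - x) Ha).
  pose proof (rr_gt a x Ha). pose proof (rr_gt a (a - x) Ha).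
  rewrite Rabs_right in H1, H2 by lra. pose proof (rr_sq a (a - x)) as Hs.
  set (r1 := rr a (a - x)) in *. set (r2 := rr a x) in *. set (u := a - x) in *.
  assert (A : ln (1 + x / r2) - ln (a / r2) = ln ((r2 + x) / a)).
  { rewrite <- ln_div.
    - f_equal. field. lra.
    - assert (0 <= x / r2) by (apply Rdiv_le_0_compat; lra). lra.
    - apply Rdiv_lt_0_compat; lra. }
  assert (Hu1 : 0 < 1 - u / r1).
  { assert (u / r1 < 1); [|lra]. apply Rmult_lt_reg_r with r1; [lra|].
    unfold Rdiv. rewrite Rmult_assoc, Rinv_l; lra. }
  assert (B : ln (a / r1) - ln (1 - u / r1) = ln ((r1 + u) / a)).
  { rewrite <- ln_div; [|apply Rdiv_lt_0_compat; lra|lra].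
    f_equal. replace (a / r1 / (1 - u / r1)) with (a / (r1 - u)) by (field; lra).
    apply Rmult_eq_reg_r with ((r1 - u) * a); [|nra].
    field_simplify; [|lra|lra]. simpl in Hs. nra. }
  unfold GT, gT. fold r1 r2 u. change (rr a u) with r1. rewrite A.
  replace (a * (ln (1 - u / r1) - ln (a / r1))) with (- (a * (ln (a / r1) - ln (1 - u / r1)))) by ring.
  change (rr a u) with r1. rewrite B. ring.
Qed.

Lemma is_derive_val (f : R -> R) x l l' : l = l' -> is_derive f x l -> is_derive f x l'.
Proof. intros; subst; auto. Qed.

Lemma outer_T a : 0 < a -> is_RInt (GT a) 0 a (JT a).
Proof.
  intro Ha.
  apply is_RInt_ext with (fun x => a * gT a x + a * gT a (a - x)).
  { rewrite Rmin_left, Rmax_right by lra. intros x Hx. symmetry. apply GT_eq; auto; lra. }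
  replace (JT a) with ((a * hT a a - a * hT a (a - a)) - (a * hT a 0 - a * hT a (a - 0))).
  - apply (FTC (fun x => a * hT a x - a * hT a (a - x))); [lra| |].
    + intros x _.
      assert (H1 := hT_deriv a x Ha).
      assert (H2 : is_derive (fun y => hT a (a - y)) x (- gT a (a - x))).
      { apply (is_derive_val _ _ (scal (-1) (gT a (a - x)))).
        { unfold scal; simpl; unfold mult; simpl; ring. }
        apply (is_derive_comp (hT a) (fun y => a - y)).
        - apply hT_deriv; auto.
        - auto_derive; auto. }
      apply (is_derive_val _ _ (minus (scal a (gT a x)) (scal a (- gT a (a - x))))).
      { unfold minus, scal, plus, opp; simpl; unfold mult; simpl; ring. }
      apply (is_derive_minus (fun y => a * hT a y) (fun y => a * hT a (a - y))).
      * apply (is_derive_scal (hT a)). auto.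
      * apply (is_derive_scal (fun y => hT a (a - y))). auto.
    + intros x _.
      apply (continuous_plus (fun x => a * gT a x) (fun x => a * gT a (a - x))).
      * apply (continuous_scal_r a (gT a)). apply gT_cont; auto.
      * apply (continuous_scal_r a (fun x => gT a (a - x))).
        apply (continuous_comp (fun y => a - y) (gT a)).
        -- apply (ex_derive_continuous (fun y => a - y)). auto_derive. auto.
        -- apply gT_cont; auto.
  - unfold JT, hT. replace (a - a) with 0 by ring. replace (a - 0) with a by ring.
    rewrite rr0, rr_aa by auto.
    replace ((a * sqrt 2 + a) / a) with (sqrt 2 + 1) by (field; lra).
    field.
Qed.

Lemma expectation_eqv a Vmin Vmax g l l' : l = l' -> expectation a Vmin Vmax g l -> expectation a Vmin Vmax g l'.
Proof. intros; subst; auto. Qed.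

Theorem lemma3 (a Vmin Vmax : R) (ha : 0 < a) (hmin : 0 < Vmin)
  (hlt : Vmin < Vmax) :
  let K := 1 / (a * PI * (Vmax - Vmin)) in
  let Iaw := K * a ^ 2 / 2 * ln (Vmax / Vmin)
             * (ln (sqrt 2 + 1) + (sqrt 2 - 1)) in
  let Iow := 2 * K * a ^ 2 * ln (Vmax / Vmin)
             * (ln (sqrt 2 + 1) + (1 - sqrt 2)) in
  expectation a Vmin Vmax
    (fun x phi v => exit_time a x phi v * ind_right a x phi v) Iaw /\
  expectation a Vmin Vmax
    (fun x phi v => exit_time a x phi v * ind_left a x phi v) Iaw /\
  expectation a Vmin Vmax
    (fun x phi v => exit_time a x phi v * ind_top a x phi v) Iow /\
  expectation a Vmin Vmax (fun x phi v => exit_time a x phi v)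
    (2 * Iaw + Iow).
Proof.
  intros K Iaw Iow. pose proof PI_RGT_0 as Hpi.
  assert (Lv : ln (Vmax / Vmin) = ln Vmax - ln Vmin) by (apply ln_div; lra).
  assert (Hd : a * PI * (Vmax - Vmin) <> 0).
  { apply Rgt_not_eq. apply Rmult_lt_0_compat; [apply Rmult_lt_0_compat|]; lra. }
  assert (EIaw : JR a * (ln Vmax - ln Vmin) / (a * PI * (Vmax - Vmin)) = Iaw).
  { unfold Iaw, K, JR. rewrite Lv. field; repeat split; lra. }
  assert (EIow : JT a * (ln Vmax - ln Vmin) / (a * PI * (Vmax - Vmin)) = Iow).
  { unfold Iow, K, JT. rewrite Lv. field; repeat split; lra. }
  split; [|split; [|split]].
  - apply (expectation_eqv _ _ _ _ _ _ EIaw).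
    apply assemble with (q := qR a) (G := GR a); auto.
    + intros x phi v Hv. unfold qR. rewrite exit_time_v, ind_right_v by auto. field. lra.
    + intros x Hx. apply mid_R; auto.
    + apply outer_R; auto.
  - apply (expectation_eqv _ _ _ _ _ _ EIaw).
    apply assemble with (q := qL a) (G := fun x => GR a (a - x)); auto.
    + intros x phi v Hv. unfold qL. rewrite exit_time_v, ind_left_v by auto. field. lra.
    + intros x Hx. apply mid_L; auto.
    + apply outer_L; auto.
  - apply (expectation_eqv _ _ _ _ _ _ EIow).
    apply assemble with (q := qT a) (G := GT a); auto.
    + intros x phi v Hv. unfold qT. rewrite exit_time_v, ind_top_v by auto. field. lra.
    + intros x Hx. apply mid_T; auto.
    + apply outer_T; auto.
  - assert (E : (JR a + JR a + JT a) * (ln Vmax - ln Vmin) / (a * PI * (Vmax - Vmin)) = 2 * Iaw + Iow).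
    { rewrite <- EIaw, <- EIow. field; repeat split; lra. }
    apply (expectation_eqv _ _ _ _ _ _ E).
    apply assemble with (q := fun x phi => qR a x phi + qL a x phi + qT a x phi)
                        (G := fun x => GR a x + GR a (a - x) + GT a x); auto.
    + intros x phi v Hv. unfold qR, qL, qT, ind_top. rewrite exit_time_v by auto. field. lra.
    + intros x Hx. apply is_RInt_add; [apply is_RInt_add|].
      * apply mid_R; auto.
      * apply mid_L; auto.
      * apply mid_T; auto.
    + apply is_RInt_add; [apply is_RInt_add|].
      * apply outer_R; auto.
      * apply outer_L; auto.
      * apply outer_T; auto.
Qed.
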